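(* Let $n,k \in \mathbb{N}$ and let $f \colon \Delta_k^n \to \mathbb{R}$ be a $1$-concave function. Then for every $(i_1,\ldots,i_k) \in \Delta_k^n$, $$f(i_1,\ldots,i_k) \geq \sum_{j=1}^k \frac{i_j}{n} f(ne_j) \quad\text{and}\quad e^{f(i_1,\ldots,i_k)} \geq \prod_{j=1}^k \big(e^{f(ne_j)}\big)^{i_j/n},$$ where $e_1,\ldots,e_k$ are the standard basis vectors of $\mathbb{R}^k$.
   Context: $\Delta_k^n$ is the set of $I \in \mathbb{N}_0^k$ with $i_1+\cdots+i_k = n$. A function $f \colon \Delta_k^n \to \mathbb{R}$ is $1$-concave if for every $y \in \Delta_k^n$ and $j_1 \neq j_2$, with $L := \{s \in \mathbb{Z} : y + s(e_{j_1}-e_{j_2}) \in \Delta_k^n\}$ and $g(s) := f(y + s(e_{j_1}-e_{j_2}))$, one has $g(\sum_r\lambda_r s_r) \geq \sum_r \lambda_r g(s_r)$ whenever $s_r \in L$, $\lambda_r \geq 0$, $\sum_r\lambda_r = 1$, $\sum_r \lambda_r s_r \in L$. *)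

(* Defs.v *)
From HB Require Import structures.
From mathcomp Require Import all_boot all_order all_algebra.
From mathcomp Require Import all_classical all_reals.
From mathcomp Require Import sequences exp.
Set Implicit Arguments. Unset Strict Implicit. Unset Printing Implicit Defensive.
Import Order.TTheory GRing.Theory Num.Theory.
Local Open Scope ring_scope.

Definition simplex (k n : nat) (x : 'I_k -> int) : Prop :=
  (forall i, 0 <= x i) /\ \sum_(i < k) x i = n%:Z.

Definition shiftv (k : nat) (y : 'I_k -> int) (j1 j2 : 'I_k) (s : int) : 'I_k -> int :=
  fun i => y i + s * ((i == j1)%:Z - (i == j2)%:Z).

Definition nbasis (k n : nat) (j : 'I_k) : 'I_k -> int :=
  fun i => (i == j)%:Z * n%:Z.

(* 1-concavity of f : Delta_k^n -> R (f given on all of Z^k; only its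
   values on Delta_k^n matter). *)
Definition one_concave (R : realType) (k n : nat) (f : ('I_k -> int) -> R) : Prop :=
  forall y : 'I_k -> int, simplex n y ->
  forall j1 j2 : 'I_k, j1 != j2 ->
  forall (m : nat) (s : 'I_m -> int) (lam : 'I_m -> R),
    (forall r, simplex n (shiftv y j1 j2 (s r))) ->
    (forall r, 0 <= lam r) ->
    \sum_(r < m) lam r = 1 ->
    forall t : int,
      t%:~R = \sum_(r < m) lam r * (s r)%:~R ->
      simplex n (shiftv y j1 j2 t) ->
      \sum_(r < m) lam r * f (shiftv y j1 j2 (s r)) <= f (shiftv y j1 j2 t).

(* Main.v *)
Require Import Defs.
From HB Require Import structures.
From mathcomp Require Import all_boot all_order all_algebra.
From mathcomp Require Import all_classical all_reals.
From mathcomp Require Import sequences exp.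
From mathcomp Require Import ring lra.
Import Order.TTheory GRing.Theory Num.Theory.
Local Open Scope ring_scope.

Lemma sum_eq1 k (j : 'I_k) : \sum_(i < k) ((i == j)%:Z) = 1.
Proof. by rewrite (bigD1 j) //= eqxx big1 ?addr0 // => i /negbTE ->. Qed.

Lemma shiftv_simplex k n (y : 'I_k -> int) j1 j2 s :
  simplex n y -> j1 != j2 -> 0 <= y j1 + s -> 0 <= y j2 - s ->
  simplex n (shiftv y j1 j2 s).
Proof.
move=> [y0 ys] j12 h1 h2; split.
  move=> i; rewrite /shiftv.
  have [->|ij1] := eqVneq i j1; first by rewrite ?eqxx (negbTE j12) /= subr0 mulr1.
  have [->|ij2] := eqVneq i j2; first by rewrite ?eqxx /= sub0r mulrN1.
  by rewrite /= subr0 mulr0 addr0.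
rewrite /shiftv big_split /= -mulr_sumr sumrB !sum_eq1 subrr mulr0 addr0 //.
Qed.

Lemma shiftv0 k (y : 'I_k -> int) j1 j2 : shiftv y j1 j2 0 = y.
Proof. by apply: funext => i; rewrite /shiftv mul0r addr0. Qed.
Definition supp {k} (x : 'I_k -> int) := [set i | x i != 0].

Lemma base (R : realType) n k (f : ('I_k -> int) -> R) x :
  (0 < n)%N -> simplex n x -> (#|supp x| <= 1)%N ->
  \sum_(j < k) ((x j)%:~R / n%:R) * f (nbasis n j) <= f x.
Proof.
move=> n0 [x0 xs] hc.
have [j xj] : exists j, x j != 0.
  apply/existsP; apply: contraTT n0; rewrite negb_exists => /forallP h.
  have : \sum_(i < k) x i = 0 by rewrite big1 // => i _; move: (h i); rewrite negbK => /eqP.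
  by rewrite xs => -[->].
have hs : supp x = [set j].
  apply/eqP; rewrite eq_sym eqEcard finset.sub1set inE xj /= cards1 //.
have xo : forall i, i != j -> x i = 0.
  move=> i ij; apply/eqP; apply: contraNT ij => h.
  have : i \in supp x by rewrite inE.
  by rewrite hs inE.
have xjn : x j = n%:Z.
  by rewrite -xs (bigD1 j) //= big1 ?addr0 // => i /xo.
have -> : x = nbasis n j.
  apply: funext => i; rewrite /nbasis.
  have [->|ij] := eqVneq i j; first by rewrite xjn mul1r.
  by rewrite xo // mul0r.
rewrite (bigD1 j) //= big1 ?addr0.
  rewrite /nbasis eqxx mul1r divff ?mul1r //.
  by rewrite pnatr_eq0 -lt0n.
by move=> i ij; rewrite /nbasis (negbTE ij) mul0r mul0r.
Qed.

Lemma shiftvR (R : realType) k (y : 'I_k -> int) j1 j2 s i : j1 != j2 ->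
  ((shiftv y j1 j2 s i)%:~R : R) =
  (y i)%:~R + s%:~R * ((i == j1)%:R - (i == j2)%:R).
Proof.
move=> j12; rewrite /shiftv.
have [->|ij1] := eqVneq i j1; first by rewrite ?eqxx (negbTE j12) /= !subr0 !mulr1 intrD.
have [->|ij2] := eqVneq i j2; first by rewrite ?eqxx /= !sub0r !mulrN1 intrD intrN.
by rewrite /= !subrr !mulr0 !addr0.
Qed.

Lemma main_ineq (R : realType) n k (f : ('I_k -> int) -> R) :
  (0 < n)%N -> one_concave n f -> forall N x, simplex n x -> (#|supp x| <= N)%N ->
  \sum_(j < k) ((x j)%:~R / n%:R) * f (nbasis n j) <= f x.
Proof.
move=> n0 hf; elim=> [|N IH] x sx hN.
  by apply: base => //; apply: leq_trans hN _.
have [hc|] := leqP #|supp x| 1; first exact: base.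
move/card_gt1P => [j1 [j2 [h1 h2 j12]]].
move: h1 h2; rewrite !inE => h1 h2.
have [x0 xs] := sx.
have p1 : 0 < x j1 by rewrite lt0r h1 x0.
have p2 : 0 < x j2 by rewrite lt0r h2 x0.
set a := shiftv x j1 j2 (x j2).
set b := shiftv x j1 j2 (- x j1).
have sa : simplex n a by apply: shiftv_simplex => //; rewrite ?subrr // addr_ge0 // ltW.
have sb : simplex n b by apply: shiftv_simplex => //; rewrite ?subrr // opprK addr_ge0 // ltW.
have ca : (#|supp a| <= N)%N.
  have : (#|supp a| < #|supp x|)%N.
    apply: (@leq_ltn_trans #|supp x :\ j2|); last by rewrite (cardsD1 j2 (supp x)) inE h2.
    apply: subset_leq_card; apply/fintype.subsetP => i; rewrite !inE /a /shiftv.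
    have [->|ij1] := eqVneq i j1; first by rewrite (negbTE j12) /=.
    have [->|ij2] := eqVneq i j2; first by rewrite /= sub0r mulrN1 subrr eqxx.
    by rewrite /= subr0 mulr0 addr0.
  by move=> H; rewrite -ltnS; apply: leq_trans H hN.
have cb : (#|supp b| <= N)%N.
  have : (#|supp b| < #|supp x|)%N.
    apply: (@leq_ltn_trans #|supp x :\ j1|); last by rewrite (cardsD1 j1 (supp x)) inE h1.
    apply: subset_leq_card; apply/fintype.subsetP => i; rewrite !inE /b /shiftv.
    have [->|ij1] := eqVneq i j1; first by rewrite (negbTE j12) /= subr0 mulr1 subrr eqxx.
    have [->|ij2] := eqVneq i j2; first by rewrite /= sub0r mulrN1 opprK.
    by rewrite /= subr0 mulr0 addr0.
  by move=> H; rewrite -ltnS; apply: leq_trans H hN.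
have Ha := IH a sa ca.
have Hb := IH b sb cb.
pose X1 : R := (x j1)%:~R.
pose X2 : R := (x j2)%:~R.
have P1 : 0 < X1 by rewrite ltr0z.
have P2 : 0 < X2 by rewrite ltr0z.
have S0 : 0 < X1 + X2 := addr_gt0 P1 P2.
have S1 : X1 + X2 != 0 := lt0r_neq0 S0.
have n1 : n%:R != 0 :> R by rewrite pnatr_eq0 -lt0n.
pose s := fun r : 'I_2 => if r == ord0 then x j2 else - x j1.
pose lam := fun r : 'I_2 => if r == ord0 then X1 / (X1 + X2) else X2 / (X1 + X2).
have hc := hf x sx j1 j2 j12 2 s lam.
have := hc _ _ _ 0 _ _.
rewrite shiftv0 !big_ord_recl !big_ord0 /= !addr0 /s /lam /=.
move=> H.
have {H} H : X1 / (X1 + X2) * f a + X2 / (X1 + X2) * f b <= f x.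
  apply: H.
  - by move=> r; case: ifP.
  - by move=> r; case: ifP => _; apply: divr_ge0; apply: ltW.
  - by field.
  - by rewrite intrN /X1 /X2; field.
  - exact: sx.
apply: le_trans H.
apply: le_trans (lerD (ler_wpM2l _ Ha) (ler_wpM2l _ Hb)); last 2 first.
- by apply: divr_ge0; apply: ltW.
- by apply: divr_ge0; apply: ltW.
rewrite !mulr_sumr -big_split /=; apply: ler_sum => j _.
rewrite /a /b !shiftvR // intrN -/X1 -/X2.
rewrite le_eqVlt; apply/orP; left; apply/eqP; by field; apply/andP; split; first [exact: n1 | exact: S1].
Qed.

Theorem lemma4p9 (R : realType) (n k : nat) (f : ('I_k -> int) -> R) :
  (0 < n)%N -> one_concave n f ->
  forall x : 'I_k -> int, simplex n x ->
    \sum_(j < k) ((x j)%:~R / n%:R) * f (nbasis n j) <= f x /\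
    \prod_(j < k) (expR (f (nbasis n j))) `^ ((x j)%:~R / n%:R) <= expR (f x).
Proof.
move=> n0 hf x sx.
have H := @main_ineq R n k f n0 hf _ x sx (leqnn _).
split=> //.
rewrite (eq_bigr (fun j => expR ((x j)%:~R / n%:R * f (nbasis n j)))).
  by rewrite -expR_sum ler_expR; exact H.
by move=> j _; rewrite -expRM mulrC.
Qed.
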